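(* Let $\mathcal{A}$ be a finite-dimensional pre-bialgebra over $\mathbb{C}$ such that $\mathcal{A}^*$ is semisimple. For $a\in\mathrm{Irr}(\mathcal{A}^* )$ let $\tau_a\in\mathcal{A}$ be the irreducible character, i.e. the element with $f(\tau_a)=\mathrm{Tr}\,\psi_a(f)$ for all $f\in\mathcal{A}^*$. Then: (1) for every representation $\phi:\mathcal{A}\to\mathrm{End}(V)$, every $n\ge1$, every basis $B$ of $\mathcal{A}$ with dual basis $\{\delta_y\}$, $$\phi^{\otimes n}\circ\Delta^{n-1}(\tau_a)=\sum_{y_1,\dots,y_n\in B}\mathrm{Tr}\big(\psi_a(\delta_{y_1})\cdots\psi_a(\delta_{y_n})\big)\,\phi(y_1)\otimes\cdots\otimes\phi(y_n);$$ (2) for all $a,b\in\mathrm{Irr}(\mathcal{A}^* )$, $\tau_a\tau_b=\sum_{c\in\mathrm{Irr}(\mathcal{A}^* )}N_{ab}^c\,\tau_c$ (product in $\mathcal{A}$), so the $\mathbb{Z}$-span of the $\tau_a$ is closed under multiplication.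
   Context: A pre-bialgebra is a finite-dimensional vector space $\mathcal{A}$ which is both a unital associative algebra and a coalgebra (coproduct $\Delta$, counit $\epsilon$) with $\Delta(xy)=\Delta(x)\Delta(y)$ (componentwise product in $\mathcal{A}\otimes\mathcal{A}$); no condition is imposed on $\Delta(1)$ or on $\epsilon$ of products. The dual $\mathcal{A}^*$ is a pre-bialgebra with product $(fg)(x)=(f\otimes g)(\Delta x)$, unit $\epsilon$, coproduct $\Delta(f)(x\otimes y)=f(xy)$ and counit $f\mapsto f(1)$. $\mathrm{Irr}(\mathcal{A}^* )$ is the set of isomorphism classes of irreducible representations of $\mathcal{A}^*$; for each class $a$ a representative $\psi_a:\mathcal{A}^*\to\mathrm{End}(W_a)$ is fixed. For representations $\psi_a,\psi_b$, the tensor product representation $\psi_a\boxtimes\psi_b$ is $f\mapsto(\psi_a\otimes\psi_b)(\Delta f)$ restricted to the range of the idempotent $(\psi_a\otimes\psi_b)(\Delta\epsilon)$; $N_{ab}^c$ is the multiplicity of $\psi_c$ in $\psi_a\boxtimes\psi_b$. $\Delta^{n-1}$ is the iterated coproduct. *)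

(* Defs.v *)
From HB Require Import structures.
From mathcomp Require Import all_boot all_algebra.
From mathcomp Require Import complex mxtens.
From mathcomp Require Import Rstruct.
From Stdlib Require Import Reals.

Set Implicit Arguments.
Unset Strict Implicit.
Unset Printing Implicit Defensive.

Import GRing.Theory.
Local Open Scope ring_scope.

Definition Cplx : numClosedFieldType := (Rdefinitions.R)[i].

Section PreBialgebra.
Variables (K : fieldType) (d : nat).

(* A pre-bialgebra of dimension d, given by its structure constants in a   *)
(* fixed basis (e_i)_{i < d}.  Elements of A are row vectors 'rV_d of       *)
(* coordinates, elements of A (x) A are d x d coefficient matrices          *)
(* (entry (i,j) = coefficient of e_i (x) e_j).                              *)
Record prebialg := PreBialg {
  pb_mul : 'I_d -> 'I_d -> 'rV[K]_d;
  pb_one : 'rV[K]_d;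
  pb_comul : 'I_d -> 'M[K]_d;          (* Delta(e_k) = sum (pb_comul k) i j e_i (x) e_j *)
  pb_counit : 'I_d -> K
}.

Variable A : prebialg.

(* basis vector e_i of A, resp. dual basis vector e^i of A^* *)
Definition pb_e (i : 'I_d) : 'rV[K]_d := delta_mx 0 i.

Definition pb_mulA (x y : 'rV[K]_d) : 'rV[K]_d :=
  \sum_(i < d) \sum_(j < d) (x 0 i * y 0 j) *: pb_mul A i j.

Definition pb_comulA (x : 'rV[K]_d) : 'M[K]_d :=
  \sum_(k < d) x 0 k *: pb_comul A k.

Definition pb_counitA (x : 'rV[K]_d) : K := \sum_(k < d) x 0 k * pb_counit A k.

(* componentwise product in A (x) A *)
Definition pbt_mul (M N : 'M[K]_d) : 'M[K]_d :=
  \matrix_(p, q) \sum_(i < d) \sum_(j < d) \sum_(k < d) \sum_(l < d)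
     M i j * N k l * (pb_mul A i k) 0 p * (pb_mul A j l) 0 q.

Definition is_prebialg : Prop :=
  [/\ (forall x y z, pb_mulA (pb_mulA x y) z = pb_mulA x (pb_mulA y z)),
      (forall x, pb_mulA (pb_one A) x = x /\ pb_mulA x (pb_one A) = x),
      (* coassociativity: (Delta (x) id) Delta = (id (x) Delta) Delta *)
      (forall k p q r : 'I_d,
         \sum_(i < d) pb_comul A k i r * pb_comul A i p q
         = \sum_(j < d) pb_comul A k p j * pb_comul A j q r),
      (* counit: (eps (x) id) Delta = id = (id (x) eps) Delta *)
      (forall k i : 'I_d,
         \sum_(j < d) pb_counit A j * pb_comul A k j i = (k == i)%:R /\
         \sum_(j < d) pb_comul A k i j * pb_counit A j = (k == i)%:R) &
      (forall x y, pb_comulA (pb_mulA x y) = pbt_mul (pb_comulA x) (pb_comulA y))].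

(* ---- The dual pre-bialgebra A^*.  f : 'rV_d represents the functional  *)
(* with f(e_i) = f 0 i.                                                    *)
Definition pb_pair (f x : 'rV[K]_d) : K := \sum_(i < d) f 0 i * x 0 i.

(* (f g)(x) = (f (x) g)(Delta x) *)
Definition pb_mulD (f g : 'rV[K]_d) : 'rV[K]_d :=
  \row_(k < d) \sum_(i < d) \sum_(j < d) pb_comul A k i j * f 0 i * g 0 j.

Definition pb_unitD : 'rV[K]_d := \row_(k < d) pb_counit A k.

Definition left_idealD (L : 'M[K]_d) : Prop :=
  forall g x : 'rV[K]_d, (x <= L)%MS -> (pb_mulD g x <= L)%MS.

Definition dual_semisimple : Prop :=
  forall L : 'M[K]_d, left_idealD L ->
    exists L' : 'M[K]_d, [/\ left_idealD L', (L :&: L' == (0 : 'M[K]_d))%MS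
                            & (L + L' == 1%:M)%MS].

(* ---- Representations (unital algebra homomorphisms into matrices,      *)
(* acting on column vectors).                                              *)
Definition is_repA m (phi : {linear 'rV[K]_d -> 'M[K]_m}) : Prop :=
  phi (pb_one A) = 1%:M /\ forall x y, phi (pb_mulA x y) = phi x *m phi y.

Definition is_repD w (psi : {linear 'rV[K]_d -> 'M[K]_w}) : Prop :=
  psi pb_unitD = 1%:M /\ forall f g, psi (pb_mulD f g) = psi f *m psi g.

(* subspaces of K^w are given as row spaces of matrices (rows = vectors);  *)
(* U is invariant iff psi(f) v \in U for every v \in U.                   *)
Definition invariantD w (psi : {linear 'rV[K]_d -> 'M[K]_w}) k
    (U : 'M[K]_(k, w)) : Prop :=
  forall f, (U *m (psi f)^T <= U)%MS.

Definition irreducibleD w (psi : {linear 'rV[K]_d -> 'M[K]_w}) : Prop :=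
  (0 < w)%nat /\
  forall U : 'M[K]_w, invariantD psi U -> (U == (0 : 'M[K]_w))%MS \/ row_full U.

Definition isoD w1 w2 (psi1 : {linear 'rV[K]_d -> 'M[K]_w1})
    (psi2 : {linear 'rV[K]_d -> 'M[K]_w2}) : Prop :=
  exists T : 'M[K]_(w1, w2),
    [/\ row_free T, row_full T & forall f, psi1 f *m T = T *m psi2 f].

(* (psi_a (x) psi_b)(Delta f), acting on K^wa (x) K^wb = K^(wa*wb)         *)
(* (Kronecker product);  Delta f = sum_{i,j} f(e_i e_j) e^i (x) e^j.       *)
Definition pb_box wa wb (psia : {linear 'rV[K]_d -> 'M[K]_wa})
    (psib : {linear 'rV[K]_d -> 'M[K]_wb}) (f : 'rV[K]_d) : 'M[K]_(wa * wb) :=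
  \sum_(i < d) \sum_(j < d)
     pb_pair f (pb_mul A i j) *: (psia (pb_e i) *t psib (pb_e j)).

(* The representation psia [x] psib is pb_box restricted to the range of the *)
(* idempotent P = pb_box pb_unitD.  [decomposition T cs] says that T is a        *)
(* linear isomorphism from K^(sum_i w (cs i)) onto range P intertwining the *)
(* direct sum of the psi (cs i) with psia [x] psib, i.e.                    *)
(*   psia [x] psib  ~=  (+)_(i < k) psi_(cs i).                             *)
Definition boxdecomp (I : finType) (w : I -> nat)
    (psi : forall c : I, {linear 'rV[K]_d -> 'M[K]_(w c)})
    (a b : I) (k : nat) (cs : 'I_k -> I)
    (T : 'M[K]_(w a * w b, \sum_(i < k) w (cs i))) : Prop :=
  [/\ row_free T^T,
      (T^T == (pb_box (psi a) (psi b) pb_unitD)^T)%MS &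
      forall f, pb_box (psi a) (psi b) f *m T
                = T *m \mxdiag_(i < k) psi (cs i) f].

Definition pb_mult (I : finType) k (cs : 'I_k -> I) (c : I) : nat :=
  #|[set i | cs i == c]|.

(* ---- Iterated coproduct Delta^(n-1) : A -> A^(x)n, with values given as *)
(* coefficient functions on n-tuples of basis indices.                    *)
(*   Delta^(-1) = epsilon,  Delta^(n) = (id (x) Delta^(n-1)) o Delta.      *)
Fixpoint iter_comul (n : nat) : 'rV[K]_d -> n.-tuple 'I_d -> K :=
  match n return 'rV[K]_d -> n.-tuple 'I_d -> K with
  | 0 => fun x _ => pb_counitA x
  | n'.+1 => fun x t =>
      \sum_(k < d) pb_comulA x (thead t) k * @iter_comul n' (pb_e k) (behead_tuple t)
  end.

(* End(K^m)^(x)n = End((K^m)^(x)n), matrices indexed by n-tuples:           *)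
(* M_1 (x) ... (x) M_n.                                                     *)
Definition tensn m n (M : 'I_n -> 'M[K]_m)
  : {ffun n.-tuple 'I_m * n.-tuple 'I_m -> K} :=
  [ffun rc => \prod_(k < n) M k (tnth rc.1 k) (tnth rc.2 k)].

Definition tenspow m (phi : {linear 'rV[K]_d -> 'M[K]_m}) n
    (X : n.-tuple 'I_d -> K) : {ffun n.-tuple 'I_m * n.-tuple 'I_m -> K} :=
  [ffun rc => \sum_(s : n.-tuple 'I_d)
                 X s * tensn (fun k => phi (pb_e (tnth s k))) rc].

End PreBialgebra.

(* Main.v *)
Require Import Defs.
From HB Require Import structures.
From mathcomp Require Import all_boot all_algebra.
From mathcomp Require Import complex mxtens.
From mathcomp Require Import ring.
From mathcomp Require Import Rstruct.
From Stdlib Require Import Classical ClassicalEpsilon.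

Set Implicit Arguments.
Unset Strict Implicit.
Unset Printing Implicit Defensive.

Import GRing.Theory.
Local Open Scope ring_scope.
Section MkLin.
Variables (K : fieldType) (d m : nat) (F : 'rV[K]_d -> 'M[K]_m) (HF : linear F).
Definition mkfun of linear F := F.
HB.instance Definition _ := GRing.isLinear.Build K 'rV[K]_d 'M[K]_m *:%R (mkfun HF) HF.
Definition mklin : {linear 'rV[K]_d -> 'M[K]_m} := mkfun HF.
Lemma mklinE x : mklin x = F x. Proof. by []. Qed.
End MkLin.

Section Split.
Variables (K : fieldType) (d N : nat) (rho : {linear 'rV[K]_d -> 'M[K]_N}).
Variable mulD : 'rV[K]_d -> 'rV[K]_d -> 'rV[K]_d.
Hypothesis rhoM : forall f g, rho (mulD f g) = rho f *m rho g.
Variable U : 'M[K]_N.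
Hypothesis Uinv : forall f, (U *m (rho f)^T <= U)%MS.

Let U0 := row_base U.
Let C0 := row_base (U^C)%MS.
Let B := col_mx U0 C0.

Lemma B_full : row_full B.
Proof.
rewrite /row_full /B -addsmxE.
by rewrite (adds_eqmx (eq_row_base U) (eq_row_base _)) ; apply: addsmx_compl_full.
Qed.

Lemma B_free : row_free B.
Proof.
rewrite /row_free (eqP B_full) mxrank_compl subnKC //; exact: rank_leq_col.
Qed.

Lemma pinvB_B : pinvmx B *m B = 1%:M.
Proof. by rewrite -[pinvmx B]mul1mx mulmxKpV // sub1mx B_full. Qed.

Lemma B_pinvB : B *m pinvmx B = 1%:M.
Proof. by apply: (row_free_inj B_free); rewrite -mulmxA pinvB_B mulmx1 mul1mx. Qed.

Definition Kf f := B *m (rho f)^T *m pinvmx B.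

Lemma KfB f : Kf f *m B = B *m (rho f)^T.
Proof. by rewrite /Kf -mulmxA pinvB_B mulmx1. Qed.

Lemma KfM f g : Kf (mulD f g) = Kf g *m Kf f.
Proof.
apply: (row_free_inj B_free) => /=.
by rewrite KfB -mulmxA KfB !mulmxA KfB rhoM trmx_mul mulmxA.
Qed.

Lemma Kf_ur f : ursubmx (Kf f) = 0.
Proof.
have sU : (U0 *m (rho f)^T <= U0)%MS.
  rewrite (eqmxMr _ (eq_row_base U)) (eq_row_base U); exact: Uinv.
set Y := U0 *m (rho f)^T *m pinvmx U0.
have HY : Y *m U0 = U0 *m (rho f)^T by rewrite mulmxKpV.
have H0 := KfB f; rewrite -[Kf f]submxK /B mul_block_col mul_col_mx in H0.
move/eq_col_mx: H0 => [H1 _].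
have : row_mx (ulsubmx (Kf f) - Y) (ursubmx (Kf f)) *m B = 0 *m B.
  by rewrite mul0mx /B mul_row_col mulmxBl addrAC H1 HY subrr.
move/(row_free_inj B_free)/eqP; rewrite row_mx_eq0 => /andP [_ /eqP //].
Qed.

Definition rho1 f := (ulsubmx (Kf f))^T.
Definition rho2 f := (drsubmx (Kf f))^T.

Lemma ul_mul m n (X Y : 'M[K]_(m+n)) :
  ursubmx X = 0 -> ulsubmx (X *m Y) = ulsubmx X *m ulsubmx Y.
Proof.
move=> HX; rewrite -{1}[X]submxK -{1}[Y]submxK mulmx_block block_mxKul HX.
by rewrite mul0mx addr0.
Qed.

Lemma dr_mul m n (X Y : 'M[K]_(m+n)) :
  ursubmx Y = 0 -> drsubmx (X *m Y) = drsubmx X *m drsubmx Y.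
Proof.
move=> HY; rewrite -{1}[X]submxK -{1}[Y]submxK mulmx_block block_mxKdr HY.
by rewrite mulmx0 add0r.
Qed.

Lemma rho1M f g : rho1 (mulD f g) = rho1 f *m rho1 g.
Proof. by rewrite /rho1 KfM ul_mul ?Kf_ur // trmx_mul. Qed.

Lemma rho2M f g : rho2 (mulD f g) = rho2 f *m rho2 g.
Proof. by rewrite /rho2 KfM dr_mul ?Kf_ur // trmx_mul. Qed.

Lemma tr_split f : \tr (rho f) = \tr (rho1 f) + \tr (rho2 f).
Proof.
rewrite /rho1 /rho2 !mxtrace_tr -(mxtrace_block _ (ursubmx (Kf f)) (dlsubmx (Kf f))) submxK /Kf.
by rewrite mxtrace_mulC mulmxA pinvB_B mul1mx mxtrace_tr.
Qed.

Lemma Kf_lin : linear Kf.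
Proof. by move=> a u v; rewrite /Kf linearP /= linearD /= linearZ /= mulmxDr mulmxDl -scalemxAr -scalemxAl. Qed.

Lemma rho1_lin : linear rho1.
Proof. move=> a u v; rewrite /rho1 Kf_lin; move: (Kf u) (Kf v) => X Y; apply/matrixP => i j; by rewrite !mxE. Qed.
Lemma rho2_lin : linear rho2.
Proof. move=> a u v; rewrite /rho2 Kf_lin; move: (Kf u) (Kf v) => X Y; apply/matrixP => i j; by rewrite !mxE. Qed.

End Split.


Section Char.
Variables (K : fieldType) (d : nat) (A : prebialg K d).
Hypothesis Hunitl : forall f, pb_mulD A (pb_unitD A) f = f.
Variables (I : finType) (w : I -> nat)
  (psi : forall c, {linear 'rV[K]_d -> 'M[K]_(w c)}).
Hypothesis Hcomplete : forall w' (rho : {linear 'rV[K]_d -> 'M[K]_w'}),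
  is_repD A rho -> irreducibleD rho -> exists c, isoD rho (psi c).

Lemma iso_tr c N (rho : {linear 'rV[K]_d -> 'M[K]_N}) :
  isoD rho (psi c) -> forall f, \tr (rho f) = \tr (psi c f).
Proof.
case=> T [fr fu HT] f; case/row_freeP: fr => Y HY; case/row_fullP: fu => X HX.
have TX : T *m X = 1%:M.
  have e : T *m X *m T = T by rewrite -mulmxA HX mulmx1.
  by rewrite -[T *m X]mulmx1 -HY mulmxA e.
by rewrite -[rho f]mulmx1 -TX mulmxA HT -mulmxA mxtrace_mulC -mulmxA HX mulmx1.
Qed.

Definition has_char N (rho : {linear 'rV[K]_d -> 'M[K]_N}) :=
  exists Nc : I -> nat, forall f, \tr (rho f) = \sum_c (Nc c)%:R * \tr (psi c f).

Lemma has_char0 N (rho : {linear 'rV[K]_d -> 'M[K]_N}) :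
  (forall f, \tr (rho f) = 0) -> has_char rho.
Proof.
move=> H; exists (fun _ => 0%N) => f; rewrite H big1 // => c _; by rewrite mul0r.
Qed.

Lemma split_step N (rho : {linear 'rV[K]_d -> 'M[K]_N})
  (rhoM : forall f g, rho (pb_mulD A f g) = rho f *m rho g)
  (U : 'M[K]_N) (Uinv : forall f, (U *m (rho f)^T <= U)%MS) :
  U != 0 -> ~~ row_full U ->
  (forall N', (N' < N)%N -> forall rho' : {linear 'rV[K]_d -> 'M[K]_N'},
      (forall f g, rho' (pb_mulD A f g) = rho' f *m rho' g) -> has_char rho') ->
  has_char rho.
Proof.
move=> U0 Unf IH.
have r1 : (\rank U < N)%N.
  have := rank_leq_col U; rewrite leq_eqVlt => /orP [/eqP E|//].
  by rewrite /row_full E eqxx in Unf.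
have r2 : (\rank U^C < N)%N.
  rewrite mxrank_compl ltn_subrL (leq_ltn_trans _ r1) // andbT.
  by rewrite lt0n mxrank_eq0.
have [N1 H1] := IH _ r1 (mklin (rho1_lin rho U))
                  (rho1M rhoM Uinv).
have [N2 H2] := IH _ r2 (mklin (rho2_lin rho U))
                  (rho2M rhoM Uinv).
exists (fun c => N1 c + N2 c)%N => f.
rewrite (tr_split rho U f) -/(mklin _ f).
rewrite H1 -/(mklin (rho2_lin rho U) f) H2 -big_split /=.
by apply: eq_bigr => c _; rewrite natrD mulrDl.
Qed.

Lemma char_decomp n : forall N, (N <= n)%N ->
  forall rho : {linear 'rV[K]_d -> 'M[K]_N},
  (forall f g, rho (pb_mulD A f g) = rho f *m rho g) -> has_char rho.
Proof.
elim: n => [|n IH] N leN rho rhoM.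
  apply: has_char0 => f; move: leN; rewrite leqn0 => /eqP N0.
  by move: rho rhoM f; rewrite N0 => rho _ f; rewrite /mxtrace big_ord0.
have IH' : forall N', (N' < N)%N -> forall rho' : {linear 'rV[K]_d -> 'M[K]_N'},
    (forall f g, rho' (pb_mulD A f g) = rho' f *m rho' g) -> has_char rho'.
  by move=> N' lt; apply: IH; rewrite -ltnS (leq_trans lt).
case: (posnP N) => [N0|Npos].
  apply: has_char0 => f.
  by move: rho rhoM f; rewrite N0 => rho _ f; rewrite /mxtrace big_ord0.
set E := rho (pb_unitD A).
have rhoE : forall f, rho f = E *m rho f by move=> f; rewrite /E -rhoM Hunitl.
have [E1|E1] := eqVneq E 1%:M.
  have [Hirr|Hnirr] := classic (irreducibleD rho).
    have [c Hc] := Hcomplete (conj E1 rhoM) Hirr.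
    exists (fun c' => (c' == c : nat)) => f; rewrite (iso_tr Hc).
    rewrite (bigD1 c) //= eqxx mul1r big1 ?addr0 // => c' /negbTE ->.
    by rewrite mul0r.
  have [U [Uinv HU]] : exists (U : 'M[K]_N), invariantD rho U /\
      ~ ((U == (0 : 'M[K]_N))%MS \/ row_full U).
    apply: NNPP => H; apply: Hnirr; split => // U Uinv.
    by apply: NNPP => H'; apply: H; exists U.
  apply: (split_step rhoM Uinv) => //.
    by apply/negP => /eqP U0; apply: HU; left; rewrite U0 !sub0mx.
  by apply/negP => Uf; apply: HU; right.
have [E0|E0] := eqVneq E 0.
  by apply: has_char0 => f; rewrite rhoE E0 mul0mx mxtrace0.
apply: (split_step (U := E^T) rhoM) => //.
- move=> f; have -> : (rho f)^T = (rho f)^T *m E^T by rewrite -trmx_mul -rhoE.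
  by rewrite mulmxA submxMl.
- by rewrite trmx_eq0.
- apply/negP; case/row_fullP => X HX; move/eqP: E1; apply.
  have EE : E^T *m E^T = E^T by rewrite -trmx_mul -rhoE.
  apply: trmx_inj; rewrite trmx1 -HX -{2}EE mulmxA HX mul1mx.
  done.
Qed.

End Char.

Section Gen.
Variable (R : nmodType) (d : nat).
Lemma xch4 (F : 'I_d -> 'I_d -> 'I_d -> 'I_d -> 'I_d -> R) :
  \sum_u \sum_i \sum_j \sum_k \sum_l F u i j k l =
  \sum_i \sum_j \sum_k \sum_l \sum_u F u i j k l.
Proof.
rewrite exchange_big; apply: eq_bigr => i _; rewrite exchange_big.
apply: eq_bigr => j _; rewrite exchange_big; apply: eq_bigr => k _.
exact: exchange_big.
Qed.
Lemma sum4_mull (R' : pzSemiRingType) (X : 'I_d -> 'I_d -> 'I_d -> 'I_d -> R') y :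
  (\sum_i \sum_j \sum_k \sum_l X i j k l) * y
  = \sum_i \sum_j \sum_k \sum_l X i j k l * y.
Proof.
rewrite mulr_suml; apply: eq_bigr => i _; rewrite mulr_suml.
apply: eq_bigr => j _; rewrite mulr_suml; apply: eq_bigr => k _.
exact: mulr_suml.
Qed.
Lemma sum4_scale (R' : pzRingType) (V : lmodType R') (X : 'I_d -> 'I_d -> 'I_d -> 'I_d -> R') (v : V) :
  (\sum_i \sum_j \sum_k \sum_l X i j k l) *: v
  = \sum_i \sum_j \sum_k \sum_l X i j k l *: v.
Proof.
rewrite scaler_suml; apply: eq_bigr => i _; rewrite scaler_suml.
apply: eq_bigr => j _; rewrite scaler_suml; apply: eq_bigr => k _.
exact: scaler_suml.
Qed.
End Gen.

Lemma xch22 (R : nmodType) (I1 I2 I3 I4 : finType) (F : I1 -> I2 -> I3 -> I4 -> R) :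
  \sum_a \sum_i \sum_j \sum_b F a i j b = \sum_a \sum_b \sum_i \sum_j F a i j b.
Proof.
apply: eq_bigr => a _.
rewrite (eq_bigr (fun i => \sum_b \sum_j F a i j b)); first exact: exchange_big.
move=> i _; exact: exchange_big.
Qed.

Section Tup.
Variables (R : comPzSemiRingType) (d : nat).

Lemma sum_tuple0 (F : 0.-tuple 'I_d -> R) : \sum_s F s = F (in_tuple [::]).
Proof.
apply: (big_pred1 (in_tuple [::] : 0.-tuple 'I_d)) => s /=.
by rewrite [s]tuple0 [in_tuple _]tuple0 eqxx.
Qed.

Lemma sum_tupleS n (F : n.+1.-tuple 'I_d -> R) :
  \sum_s F s = \sum_i \sum_(t : n.-tuple 'I_d) F [tuple of i :: t].
Proof.
rewrite pair_big /=.
rewrite (reindex (fun p : 'I_d * n.-tuple 'I_d => [tuple of p.1 :: p.2])) //=.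
exists (fun s : n.+1.-tuple 'I_d => (thead s, [tuple of behead s])).
  by move=> [i t] _ /=; rewrite theadE; congr (_, _); apply: val_inj.
by move=> s _ /=; rewrite [RHS]tuple_eta; apply: val_inj.
Qed.

Lemma sum_prod_tuple n (G : 'I_n -> 'I_d -> R) :
  \sum_(s : n.-tuple 'I_d) \prod_(k < n) G k (tnth s k)
  = \prod_(k < n) \sum_j G k j.
Proof.
elim: n G => [|n IH] G.
  by rewrite sum_tuple0 !big_ord0.
rewrite sum_tupleS big_ord_recl big_distrl /=; apply: eq_bigr => i _.
under eq_bigr => t _ do rewrite big_ord_recl tnth0.
rewrite -big_distrr /=; congr (_ * _).
under eq_bigr => t _ do under eq_bigr => k _ do rewrite tnthS.
exact: (IH (fun k => G (lift ord0 k))).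
Qed.
End Tup.

Section Tens.
Variable K : comPzRingType.
Lemma tens_sum2 (J : finType) m n p q (a b : J -> K) (X : J -> 'M[K]_(m,n))
   (Y : J -> 'M[K]_(p,q)) :
  (\sum_i a i *: X i) *t (\sum_j b j *: Y j)
  = \sum_i \sum_j (a i * b j) *: (X i *t Y j).
Proof.
apply/matrixP => x y; rewrite mxE !summxE big_distrl /=.
apply: eq_bigr => i _; rewrite summxE big_distrr /=; apply: eq_bigr => j _.
by rewrite !mxE /= -!mulrA; congr (_ * _); rewrite mulrCA.
Qed.
End Tens.

Section PB.
Variables (K : fieldType) (d : nat) (A : prebialg K d).
Hypothesis HA : is_prebialg A.
Local Notation e := (pb_e K).
Implicit Types (f g x y : 'rV[K]_d).

Lemma pb_eE (i j : 'I_d) : e i 0 j = (i == j)%:R.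
Proof. by rewrite /pb_e mxE eqxx eq_sym. Qed.

Lemma pair_e f (i : 'I_d) : pb_pair f (e i) = f 0 i.
Proof.
rewrite /pb_pair (bigD1 i) //= pb_eE eqxx mulr1 big1 ?addr0 // => j /negbTE ji.
by rewrite pb_eE eq_sym ji mulr0.
Qed.

Lemma pair_el x (i : 'I_d) : pb_pair (e i) x = x 0 i.
Proof.
rewrite /pb_pair (bigD1 i) //= pb_eE eqxx mul1r big1 ?addr0 // => j /negbTE ji.
by rewrite pb_eE eq_sym ji mul0r.
Qed.

Lemma pair_inj x y : (forall f, pb_pair f x = pb_pair f y) -> x = y.
Proof.
by move=> H; apply/rowP => i; rewrite -!pair_el H.
Qed.

Lemma lin_decomp m (phi : {linear 'rV[K]_d -> 'M[K]_m}) f :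
  phi f = \sum_p f 0 p *: phi (e p).
Proof.
rewrite {1}(row_sum_delta f) linear_sum; apply: eq_bigr => p _.
by rewrite linearZ.
Qed.

Lemma pair_mulA f x y : pb_pair f (pb_mulA A x y)
  = \sum_i \sum_j x 0 i * y 0 j * pb_pair f (pb_mul A i j).
Proof.
rewrite /pb_pair /pb_mulA.
under eq_bigr => k _ do rewrite !summxE big_distrr /=.
rewrite exchange_big; apply: eq_bigr => i _.
under eq_bigr => k _ do rewrite summxE big_distrr /=.
rewrite exchange_big; apply: eq_bigr => j _.
rewrite big_distrr; apply: eq_bigr => k _ /=.
by rewrite mxE mulrCA.
Qed.

Lemma pair_mulD f g x : pb_pair (pb_mulD A f g) x
  = \sum_i \sum_j pb_comulA A x i j * f 0 i * g 0 j.
Proof.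
rewrite /pb_pair /pb_mulA /pb_comulA.
under eq_bigr => k _ do rewrite mxE big_distrl /=.
rewrite exchange_big; apply: eq_bigr => i _.
under eq_bigr => k _ do rewrite big_distrl /=.
rewrite exchange_big; apply: eq_bigr => j _.
rewrite !summxE !big_distrl; apply: eq_bigr => k _ /=.
rewrite !mxE; ring.
Qed.

Lemma sum_e (F : 'I_d -> K) i : \sum_j F j * e i 0 j = F i.
Proof.
rewrite (bigD1 i) //= pb_eE eqxx mulr1 big1 ?addr0 // => j /negbTE ji.
by rewrite pb_eE eq_sym ji mulr0.
Qed.

Lemma sum_e' (F : 'I_d -> K) i : \sum_j e i 0 j * F j = F i.
Proof. by rewrite -(sum_e F i); apply: eq_bigr => j _; rewrite mulrC. Qed.

Lemma mulD_unitl f : pb_mulD A (pb_unitD A) f = f.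
Proof.
case: HA => _ _ _ Hc _.
apply/rowP => k; rewrite mxE exchange_big /=.
have H : forall j, \sum_i pb_comul A k i j * (pb_unitD A) 0 i * f 0 j
                   = (k == j)%:R * f 0 j.
  move=> j; rewrite -big_distrl /=; congr (_ * _).
  by rewrite -(Hc k j).1; apply: eq_bigr => i _; rewrite mxE mulrC.
under eq_bigr => j _ do rewrite H.
rewrite (bigD1 k) //= eqxx mul1r big1 ?addr0 // => j /negbTE jk.
by rewrite eq_sym jk mul0r.
Qed.

Lemma mulD_e i k : pb_mulD A (e i) (e k) = \sum_p pb_comul A p i k *: e p.
Proof.
apply/rowP => p; rewrite summxE mxE.
under eq_bigr => i' _ do rewrite (sum_e (fun j' => pb_comul A p i' j' * e i 0 i')).
under eq_bigr => i' _ do rewrite mulrC.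
rewrite sum_e'.
under [RHS]eq_bigr => q _ do rewrite mxE pb_eE eq_sym -pb_eE.
by rewrite sum_e.
Qed.

Lemma mulA_e p q : pb_mulA A (e p) (e q) = pb_mul A p q.
Proof.
rewrite /pb_mulA (bigD1 p) //= [X in _ + X]big1 ?addr0; last first.
  move=> i /negbTE ip; apply: big1 => j _; by rewrite pb_eE eq_sym ip mul0r scale0r.
rewrite (bigD1 q) //= [X in _ + X]big1 ?addr0; last first.
  by move=> j /negbTE jq; rewrite !pb_eE eq_sym jq mulr0 scale0r.
by rewrite !pb_eE !eqxx mulr1 scale1r.
Qed.

Lemma comulA_e p : pb_comulA A (e p) = pb_comul A p.
Proof.
rewrite /pb_comulA (bigD1 p) //= big1 ?addr0; last first.
  by move=> i /negbTE ip; rewrite pb_eE eq_sym ip scale0r.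
by rewrite pb_eE eqxx scale1r.
Qed.

Lemma box_coef f g p q :
  \sum_i \sum_j \sum_k \sum_l
     (pb_pair f (pb_mul A i j) * pb_pair g (pb_mul A k l))
     * (pb_comul A p i k * pb_comul A q j l)
  = pb_pair (pb_mulD A f g) (pb_mul A p q).
Proof.
case: HA => _ _ _ _ Hm.
rewrite pair_mulD -mulA_e Hm !comulA_e.
under [RHS]eq_bigr => u _ do under eq_bigr => v _ do
  rewrite mxE sum4_mull sum4_mull.
under [RHS]eq_bigr => u _ do rewrite xch4.
rewrite [RHS]xch4.
under eq_bigr => i _ do rewrite exchange_big.
apply: eq_bigr => i _; apply: eq_bigr => k _; apply: eq_bigr => j _;
  apply: eq_bigr => l _.
rewrite /pb_pair big_distrlr mulr_suml; apply: eq_bigr => u _.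
rewrite mulr_suml; apply: eq_bigr => v _.
rewrite /=; ring.
Qed.

Lemma behead_cons n (i : 'I_d) (t : n.-tuple 'I_d) :
  behead_tuple [tuple of i :: t] = t.
Proof. exact: val_inj. Qed.

Lemma iter_pair n x (fs : n.-tuple 'rV[K]_d) :
  \sum_(s : n.-tuple 'I_d) iter_comul A x s * \prod_(k < n) (tnth fs k) 0 (tnth s k)
  = pb_pair (foldr (pb_mulD A) (pb_unitD A) fs) x.
Proof.
elim: n x fs => [|n IH] x fs.
  rewrite sum_tuple0 big_ord0 mulr1 [fs]tuple0 /= /pb_counitA /pb_pair.
  by apply: eq_bigr => k _; rewrite mxE mulrC.
case/tupleP: fs => f fs; rewrite sum_tupleS /= pair_mulD.
apply: eq_bigr => i _.
under eq_bigr => t _ do rewrite /= theadE behead_cons big_ord_recl tnth0 big_distrl /=.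
rewrite exchange_big /=; apply: eq_bigr => j _.
rewrite -(pair_e (foldr (pb_mulD A) (pb_unitD A) fs) j) -IH big_distrr /=; apply: eq_bigr => t _.
under eq_bigr => k _ do rewrite !tnthS.
by rewrite /=; ring.
Qed.

Lemma rep_foldr w (psi : {linear 'rV[K]_d -> 'M[K]_w}) (Hp : is_repD A psi) n
  (fs : n.-tuple 'rV[K]_d) :
  psi (foldr (pb_mulD A) (pb_unitD A) fs) = \prod_(k < n) psi (tnth fs k).
Proof.
case: Hp => H1 HM; elim: n fs => [|n IH] fs.
  by rewrite [fs]tuple0 big_ord0 /= H1.
case/tupleP: fs => f fs; rewrite big_ord_recl /= HM IH tnth0 mulmxE.
by congr (_ * _); apply: eq_bigr => k _; rewrite tnthS.
Qed.

Lemma pair_sumZ (J : finType) (a : J -> K) (x : J -> 'rV[K]_d) f :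
  pb_pair f (\sum_c a c *: x c) = \sum_c a c * pb_pair f (x c).
Proof.
rewrite /pb_pair; under eq_bigr => k _ do rewrite summxE big_distrr /=.
rewrite exchange_big; apply: eq_bigr => c _; rewrite big_distrr /=.
by apply: eq_bigr => k _; rewrite mxE mulrCA.
Qed.

Lemma pair_linl f g x a : pb_pair (a *: f + g) x = a * pb_pair f x + pb_pair g x.
Proof.
rewrite /pb_pair big_distrr -big_split /=; apply: eq_bigr => k _.
by rewrite !mxE mulrDl mulrA.
Qed.

Lemma mulA_suml (J : finType) (c : J -> K) (x : J -> 'rV[K]_d) y :
  pb_mulA A (\sum_a c a *: x a) y = \sum_a c a *: pb_mulA A (x a) y.
Proof.
rewrite /pb_mulA.
under eq_bigr => i _ do under eq_bigr => j _ do
  rewrite summxE big_distrl scaler_suml /=.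
under eq_bigr => i _ do rewrite exchange_big /=.
rewrite exchange_big /=; apply: eq_bigr => a _.
rewrite scaler_sumr; apply: eq_bigr => i _; rewrite scaler_sumr.
by apply: eq_bigr => j _; rewrite mxE scalerA mulrA.
Qed.

Lemma mulA_sumr (J : finType) (c : J -> K) x (y : J -> 'rV[K]_d) :
  pb_mulA A x (\sum_a c a *: y a) = \sum_a c a *: pb_mulA A x (y a).
Proof.
rewrite /pb_mulA.
under eq_bigr => i _ do under eq_bigr => j _ do
  rewrite summxE big_distrr scaler_suml /=.
under eq_bigr => i _ do rewrite exchange_big /=.
rewrite exchange_big /=; apply: eq_bigr => a _.
rewrite scaler_sumr; apply: eq_bigr => i _; rewrite scaler_sumr.
by apply: eq_bigr => j _; rewrite mxE scalerA mulrCA.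
Qed.

Section Box.
Variables (wa wb : nat) (psia : {linear 'rV[K]_d -> 'M[K]_wa})
  (psib : {linear 'rV[K]_d -> 'M[K]_wb}).
Hypotheses (Ha : forall f g, psia (pb_mulD A f g) = psia f *m psia g)
           (Hb : forall f g, psib (pb_mulD A f g) = psib f *m psib g).

Lemma tr_tens m n (X : 'M[K]_m) (Y : 'M[K]_n) : \tr (X *t Y) = \tr X * \tr Y.
Proof. by rewrite /mxtrace mulr_sum; apply: eq_bigr => k _; rewrite mxE. Qed.

Lemma box_tr ta tb (Hta : forall f, pb_pair f ta = \tr (psia f))
  (Htb : forall f, pb_pair f tb = \tr (psib f)) f :
  \tr (pb_box A psia psib f) = pb_pair f (pb_mulA A ta tb).
Proof.
rewrite pair_mulA /pb_box raddf_sum; apply: eq_bigr => i _.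
rewrite raddf_sum; apply: eq_bigr => j _.
by rewrite /= mxtraceZ tr_tens -Hta -Htb !pair_el mulrC.
Qed.

Lemma box_mul f g :
  pb_box A psia psib (pb_mulD A f g) = pb_box A psia psib f *m pb_box A psia psib g.
Proof.
rewrite /pb_box.
have E1 : forall i k, psia (e i) *m psia (e k) = \sum_p pb_comul A p i k *: psia (e p).
  by move=> i k; rewrite -Ha mulD_e linear_sum; apply: eq_bigr => p _; rewrite linearZ.
have E2 : forall i k, psib (e i) *m psib (e k) = \sum_p pb_comul A p i k *: psib (e p).
  by move=> i k; rewrite -Hb mulD_e linear_sum; apply: eq_bigr => p _; rewrite linearZ.
symmetry; rewrite mulmx_suml.
under eq_bigr => i _ do rewrite mulmx_suml.
under eq_bigr => i _ do under eq_bigr => j _ do rewrite mulmx_sumr.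
under eq_bigr => i _ do under eq_bigr => j _ do under eq_bigr => k _ do
  rewrite mulmx_sumr.
under eq_bigr => i _ do under eq_bigr => j _ do under eq_bigr => k _ do
  under eq_bigr => l _ do
  rewrite -scalemxAl -scalemxAr scalerA tensmx_mul E1 E2 tens_sum2 scaler_sumr.
under eq_bigr => i _ do under eq_bigr => j _ do under eq_bigr => k _ do
  under eq_bigr => l _ do under eq_bigr => p _ do rewrite scaler_sumr.
rewrite -xch4.
under eq_bigr => p _ do rewrite -xch4.
apply: eq_bigr => p _; apply: eq_bigr => q _.
rewrite -box_coef sum4_scale; apply: eq_bigr => i _; apply: eq_bigr => j _.
apply: eq_bigr => k _; apply: eq_bigr => l _.
by rewrite scalerA.
Qed.

Lemma box_unit_idem : pb_box A psia psib (pb_unitD A) *m pb_box A psia psib (pb_unitD A)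
   = pb_box A psia psib (pb_unitD A).
Proof. by rewrite -box_mul mulD_unitl. Qed.

Lemma box_unitl f : pb_box A psia psib (pb_unitD A) *m pb_box A psia psib f
   = pb_box A psia psib f.
Proof. by rewrite -box_mul mulD_unitl. Qed.

Lemma box_tr_T S (D : 'rV[K]_d -> 'M[K]_S) (T : 'M[K]_(wa * wb, S)) :
  row_free T^T -> (T^T == (pb_box A psia psib (pb_unitD A))^T)%MS ->
  (forall f, pb_box A psia psib f *m T = T *m D f) ->
  forall f, \tr (pb_box A psia psib f) = \tr (D f).
Proof.
set P := pb_box A psia psib (pb_unitD A).
move=> Tfree /andP [sTP sPT] HT f.
have ET : T = P *m (T^T *m pinvmx P^T)^T.
  by apply: trmx_inj; rewrite trmx_mul trmxK mulmxKpV.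
have EP : P = T *m (P^T *m pinvmx T^T)^T.
  by apply: trmx_inj; rewrite trmx_mul trmxK mulmxKpV.
set Z := (P^T *m pinvmx T^T)^T in EP.
have PT : P *m T = T by rewrite {1}ET mulmxA box_unit_idem -ET.
have ZT : Z *m T = 1%:M.
  apply: trmx_inj; apply: (row_free_inj Tfree); rewrite trmx1 mul1mx -trmx_mul.
  by rewrite mulmxA -EP PT.
rewrite -box_unitl -/P {1}EP -mulmxA mxtrace_mulC -mulmxA HT mulmxA ZT mul1mx.
done.
Qed.

Lemma box_lin : linear (pb_box A psia psib).
Proof.
move=> a u v; rewrite /pb_box scaler_sumr -big_split /=; apply: eq_bigr => i _.
rewrite scaler_sumr -big_split /=; apply: eq_bigr => j _.
by rewrite pair_linl scalerDl scalerA.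
Qed.

End Box.

End PB.

Theorem proposition4p3
  (d : nat) (A : prebialg Cplx d)
  (HA : is_prebialg A)
  (Hss : dual_semisimple A)
  (* Irr(A-dual): a complete set of pairwise non-isomorphic irreducible      *)
  (* representations psi c : A-dual -> End(W_c), W_c = C^(w c).              *)
  (I : finType) (w : I -> nat)
  (psi : forall c : I, {linear 'rV[Cplx]_d -> 'M[Cplx]_(w c)})
  (Hrep : forall c, is_repD A (psi c))
  (Hirr : forall c, irreducibleD (psi c))
  (Hdist : forall c c', isoD (psi c) (psi c') -> c = c')
  (Hcomplete : forall (w' : nat) (rho : {linear 'rV[Cplx]_d -> 'M[Cplx]_w'}),
      is_repD A rho -> irreducibleD rho -> exists c, isoD rho (psi c))
  (* the irreducible characters tau_a in A *)
  (tau : I -> 'rV[Cplx]_d)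
  (Htau : forall a (f : 'rV[Cplx]_d), pb_pair f (tau a) = \tr (psi a f)) :
  (* (1) *)
  (forall (a : I) (m : nat) (phi : {linear 'rV[Cplx]_d -> 'M[Cplx]_m}),
     is_repA A phi ->
     forall n : nat, (0 < n)%nat ->
     forall (y delta : 'I_d -> 'rV[Cplx]_d),
       row_free (\matrix_(i < d) y i) ->
       (forall i j, pb_pair (delta j) (y i) = (i == j)%:R) ->
       tenspow phi (@iter_comul Cplx d A n (tau a))
       = [ffun rc => \sum_(s : n.-tuple 'I_d)
            \tr (\prod_(k < n) psi a (delta (tnth s k)))
            * tensn (fun k => phi (y (tnth s k))) rc])
  /\
  (* (2) *)
  (forall (a b : I) (k : nat) (cs : 'I_k -> I)
          (T : 'M[Cplx]_(w a * w b, \sum_(i < k) w (cs i))),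
     @boxdecomp Cplx d A I w psi a b k cs T ->
     pb_mulA A (tau a) (tau b) = \sum_(c : I) (pb_mult cs c)%:R *: tau c)
  /\
  (* the Z-span of the tau_a is closed under multiplication *)
  (forall alpha beta : I -> int,
     exists gamma : I -> int,
       pb_mulA A (\sum_(a : I) (alpha a)%:~R *: tau a)
              (\sum_(b : I) (beta b)%:~R *: tau b)
       = \sum_(c : I) (gamma c)%:~R *: tau c).

Proof.
have HpM c : forall f g, psi c (pb_mulD A f g) = psi c f *m psi c g.
  exact: (Hrep c).2.
have Hunitl := mulD_unitl HA.
have Hdec : forall a b, exists Nc : I -> nat, forall f,
    pb_pair f (pb_mulA A (tau a) (tau b)) = \sum_c (Nc c)%:R * pb_pair f (tau c).
  move=> a b.
  have [Nc HNc] := @char_decomp _ _ A Hunitl _ _ _ Hcomplete _ _ (leqnn _)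
     (mklin (box_lin A (psi a) (psi b))) (box_mul HA (HpM a) (HpM b)).
  exists Nc => f; rewrite -(box_tr A (Htau a) (Htau b)).
  rewrite -[pb_box _ _ _ f]/(mklin (box_lin A (psi a) (psi b)) f) HNc.
  by apply: eq_bigr => c _; rewrite Htau.
split; last split.
- move=> a m phi Hphi n n0 y delta Yfree Hdual.
  pose Y := \matrix_(i < d, k < d) y i 0 k.
  pose D := \matrix_(i < d, k < d) delta i 0 k.
  have YD : Y *m D^T = 1%:M.
    apply/matrixP => i j; rewrite !mxE -Hdual /pb_pair.
    by apply: eq_bigr => k _; rewrite !mxE mulrC.
  have DY := mulmx1C YD.
  have Hdel : forall t : 'I_d, \sum_j delta j 0 t *: y j = pb_e Cplx t.
    move=> t; apply/rowP => q; rewrite summxE pb_eE.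
    have := congr1 (fun M : 'M[Cplx]_d => M t q) DY; rewrite !mxE => <-.
    by apply: eq_bigr => j _; rewrite !mxE.
  have Hphie : forall t r c, phi (pb_e Cplx t) r c = \sum_j delta j 0 t * phi (y j) r c.
    move=> t r c; rewrite -Hdel linear_sum summxE; apply: eq_bigr => j _.
    by rewrite linearZ mxE.
  have Htr : forall s : n.-tuple 'I_d,
      \tr (\prod_(k < n) psi a (delta (tnth s k)))
      = \sum_(t : n.-tuple 'I_d) iter_comul A (tau a) t
           * \prod_(k < n) delta (tnth s k) 0 (tnth t k).
    move=> s.
    transitivity (pb_pair (foldr (pb_mulD A) (pb_unitD A) (map_tuple delta s)) (tau a)).
      rewrite Htau (rep_foldr (Hrep a)); congr (\tr _).
      by apply: eq_bigr => k _; rewrite tnth_map.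
    rewrite -iter_pair; apply: eq_bigr => t _; congr (_ * _).
    by apply: eq_bigr => k _; rewrite tnth_map.
  apply/ffunP => rc; rewrite !ffunE; symmetry.
  under eq_bigr => s _ do rewrite Htr big_distrl /=.
  rewrite exchange_big /=; apply: eq_bigr => t _.
  under eq_bigr => s _ do rewrite -mulrA.
  rewrite -mulr_sumr; congr (_ * _).
  rewrite /tensn ffunE; under eq_bigr => s _ do rewrite ffunE -big_split /=.
  rewrite (sum_prod_tuple (fun k j => delta j 0 (tnth t k) * phi (y j) (tnth rc.1 k) (tnth rc.2 k))).
  by apply: eq_bigr => k _; rewrite Hphie.
- move=> a b k cs T [Tfree TP HT].
  apply: pair_inj => f.
  rewrite -(box_tr A (Htau a) (Htau b)).
  rewrite (box_tr_T HA (HpM a) (HpM b) (D := fun f => \mxdiag_(i < k) psi (cs i) f) Tfree TP HT).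
  rewrite mxtrace_mxdiag pair_sumZ.
  under [RHS]eq_bigr => c _ do rewrite Htau.
  rewrite (partition_big cs predT) //=; apply: eq_bigr => c _.
  rewrite (eq_bigr (fun _ => \tr (psi c f))); last by move=> i /eqP ->.
  transitivity (\sum_(i in [set i | cs i == c]) \tr (psi c f)).
    by apply: eq_bigl => i; rewrite inE.
  by rewrite sumr_const mulr_natl.
- move=> alpha beta.
  pose Nf a b := proj1_sig (constructive_indefinite_description _ (Hdec a b)).
  have HN : forall a b f, pb_pair f (pb_mulA A (tau a) (tau b))
      = \sum_c (Nf a b c)%:R * pb_pair f (tau c).
    by move=> a b; exact: (proj2_sig (constructive_indefinite_description _ (Hdec a b))).
  exists (fun c => \sum_a \sum_b alpha a * beta b * (Nf a b c)%:Z).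
  apply: pair_inj => f.
  transitivity (\sum_a \sum_b (alpha a)%:~R * (beta b)%:~R
                  * pb_pair f (pb_mulA A (tau a) (tau b))).
    rewrite mulA_suml pair_sumZ; apply: eq_bigr => a _.
    rewrite mulA_sumr pair_sumZ big_distrr /=; apply: eq_bigr => b _.
    by rewrite mulrA.
  rewrite pair_sumZ.
  under eq_bigr => a _ do under eq_bigr => b _ do rewrite HN big_distrr /=.
  under eq_bigr => a _ do rewrite exchange_big /=.
  rewrite exchange_big /=; apply: eq_bigr => c _.
  rewrite rmorph_sum big_distrl /=; apply: eq_bigr => a _.
  rewrite rmorph_sum big_distrl /=; apply: eq_bigr => b _.
  by rewrite !(@intrM Cplx) !mulrA.
Qed.
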